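(* Let $f\in\mathcal{CM}$ with representing measure $\nu$, and let $f_e:(\omega_0,\infty)\to\mathbb{R}$ be its extension. Then $f_e\in C^\infty(\omega_0,\infty)$, and for all $m\in\mathbb{N}\cup\{0\}$ and all $\lambda>\omega_0$: \[ (-1)^m f_e^{(m)}(\lambda)\ge0\quad\text{and}\quad f_e^{(m)}(\lambda)=(-1)^m\int_{[0,\infty)}t^m e^{-\lambda t}\,\nu(dt). \] In particular $f_e(\lambda)=\int_{[0,\infty)}e^{-\lambda t}\nu(dt)$ for all $\lambda>\omega_0$.
   Context: A function $f:(0,\infty)\to\mathbb{R}$ is completely monotone, $f\in\mathcal{CM}$, if it is $C^\infty$ and $(-1)^n f^{(n)}(\lambda)\ge0$ for all $n\ge0$, $\lambda>0$; its representing measure is the unique measure $\nu$ on $[0,\infty)$ with $f(\lambda)=\int_{[0,\infty)}e^{-\lambda t}\nu(dt)$. For $n\ge0$, $f^{(n)}(0+):=\lim_{\lambda\to0+}f^{(n)}(\lambda)\in[-\infty,\infty]$. If all $f^{(n)}(0+)$ are finite, $\omega_0=\omega_0^f:=\inf\{\lambda\in\mathbb{R}:\sum_{n\ge0}\frac{f^{(n)}(0+)}{n!}\lambda^n\text{ converges}\}$; otherwise $\omega_0:=0$. The extension $f_e:(\omega_0,\infty)\to\mathbb{R}$ is $f_e(\lambda)=\sum_{n\ge0}\frac{f^{(n)}(0+)}{n!}\lambda^n$ for $\omega_0<\lambda\le0$ and $f_e(\lambda)=f(\lambda)$ for $\lambda>0$. *)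

(* Defs.v *)
From HB Require Import structures.
From mathcomp Require Import all_boot all_order all_algebra.
From mathcomp Require Import all_classical all_reals all_analysis.
Set Implicit Arguments. Unset Strict Implicit. Unset Printing Implicit Defensive.
Import Order.TTheory GRing.Theory Num.Theory.
Import numFieldNormedType.Exports.
Local Open Scope classical_set_scope.
Local Open Scope ring_scope.

Section Defs.
Variable R : realType.

Definition completely_monotone (f : R -> R) : Prop :=
  (forall n (x : R), 0 < x -> derivable ((derive1n n f)) x 1) /\
  (forall n (x : R), 0 < x -> 0 <= (-1) ^+ n * (derive1n n f) x).

Definition represents (f : R -> R) (nu : {measure set R -> \bar R}) : Prop :=
  forall l : R, 0 < l ->
    (f l)%:E = (\int[nu]_(t in `[0%R, +oo[) (expR (- (l * t)))%:E)%E.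

Definition derivs0_finite (f : R -> R) : Prop :=
  forall n, exists l : R, ((derive1n n f)) x @[x --> (0:R)^'+] --> l.

Definition deriv0 (f : R -> R) (n : nat) : R :=
  lim (((derive1n n f)) x @[x --> (0:R)^'+]).

Definition taylor0_term (f : R -> R) (l : R) (n : nat) : R :=
  deriv0 f n / (n`!)%:R * l ^+ n.

Definition taylor0_cvg (f : R -> R) (l : R) : Prop :=
  cvgn (series (taylor0_term f l)).

Definition omega0 (f : R -> R) : \bar R :=
  if `[< derivs0_finite f >] then
    ereal_inf [set (l%:E)%E | l in [set l : R | taylor0_cvg f l]]
  else 0%E.

(* the extension f_e; its values on (-oo, omega0] are irrelevant *)
Definition fext (f : R -> R) (l : R) : R :=
  if 0 < l then f l else limn (series (taylor0_term f l)).

End Defs.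

(* Main.v *)
Require Import Defs.
From HB Require Import structures.
From mathcomp Require Import all_boot all_order all_algebra.
From mathcomp Require Import all_classical all_reals all_analysis.
From mathcomp Require Import measurable_realfun lebesgue_integral_under.
From mathcomp Require Import ring lra.
Import Order.TTheory GRing.Theory Num.Theory.
Import numFieldNormedType.Exports.
Local Open Scope classical_set_scope.
Local Open Scope ring_scope.
Set Implicit Arguments. Unset Strict Implicit.

Lemma seriesE_EFin (R : realType) (u : R ^nat) :
  (fun k => (\sum_(0 <= i < k) (u i)%:E)%E) = EFin \o series u.
Proof. by apply/funext => k /=; rewrite sumEFin. Qed.

Lemma Lser1 (R : realType) (u : R ^nat) : cvgn (series u) ->
  (\sum_(0 <= n <oo) (u n)%:E)%E = (limn (series u))%:E.
Proof. by move=> cu; rewrite seriesE_EFin EFin_lim. Qed.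

Lemma Lser2 (R : realType) (u : R ^nat) (x : R) : (forall n, 0 <= u n) ->
  (\sum_(0 <= n <oo) (u n)%:E)%E = x%:E -> series u @ \oo --> x.
Proof.
move=> u0 hx.
have hc : cvgn (fun k => (\sum_(0 <= i < k) (u i)%:E)%E).
  by apply: is_cvg_nneseries => n _ _; rewrite lee_fin.
have := hc; rewrite seriesE_EFin => hc'.
have : (EFin \o series u) @ \oo --> x%:E.
  rewrite -hx seriesE_EFin; exact: hc'.
move/fine_cvg; apply: cvg_trans; apply: near_eq_cvg; exact: nearW.
Qed.

Lemma pow_le_exp (R : realType) (x : R) m : 0 <= x -> x ^+ m <= m`!%:R * expR x.
Proof.
move=> x0; case: m => [|n].
  rewrite expr0 fact0 mul1r; apply: le_trans (expR_ge1Dx x).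
  by rewrite lerDl.
have := expR_ge1Dxn n x0 => H.
have H2 : x ^+ n.+1 / n.+1`!%:R <= expR x.
  by apply: le_trans H; rewrite lerDr.
have f0 : 0 < (n.+1)`!%:R :> R by rewrite ltr0n fact_gt0.
by rewrite -ler_pdivrMl // mulrC.
Qed.

Section Core.
Variable R : realType.
Variable nu : {measure set R -> \bar R}.

Definition Gf (m : nat) (l : R) (t : R) : R := t ^+ m * expR (- (l * t)).

Lemma mGf (m : nat) (l : R) : measurable_fun (`[0%R, +oo[ : set R) (Gf m l).
Proof.
apply: measurable_funM; first exact: measurable_funX.
apply: measurableT_comp; first exact: measurable_expR.
by apply: measurableT_comp => //.
Qed.

Lemma intGf (m : nat) (l l' : R) : l' < l ->
  nu.-integrable `[0%R, +oo[ (fun t => (expR (- (l' * t)))%:E) ->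
  nu.-integrable `[0%R, +oo[ (EFin \o Gf m l).
Proof.
move=> ll' hi.
set d := l - l'.
have d0 : 0 < d by rewrite subr_gt0.
set k := m`!%:R / d ^+ m.
have := integrableZl (measurable_itv _) k hi => hk.
apply: le_integrable hk.
  exact: measurable_itv.
  apply/measurable_EFinP. exact: mGf.
move=> t /=; rewrite in_itv /= andbT => t0.
have k0 : 0 <= k by rewrite /k divr_ge0 // exprn_ge0 // ltW.
rewrite /= lee_fin !ger0_norm ?mulr_ge0 ?expR_ge0 ?exprn_ge0 //.
rewrite /Gf.
have hx := @pow_le_exp _ _ m (mulr_ge0 (ltW d0) t0).
have e : expR (- (l' * t)) = expR (d * t) * expR (- (l * t)).
  by rewrite -expRD /d; congr expR; ring.
rewrite e mulrA ler_wpM2r ?expR_ge0 //.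
have dm : 0 < d ^+ m by rewrite exprn_gt0.
rewrite mulrAC ler_pdivlMr // mulrC -exprMn mulrC.
  by rewrite [d * t]mulrC in hx.
by rewrite invr_ge0 exprn_ge0 // ltW.
Qed.

Lemma derGf (m : nat) (t x : R) :
  is_derive x 1 (fun x => Gf m x t) (- Gf m.+1 x t).
Proof.
have h1 : is_derive x 1 (fun y : R => - (y * t)) (- t).
  have h := is_deriveZ t (is_derive_id x (1 : R)).
  have h' := is_deriveN h.
  have e : (fun y : R => - (y * t)) = - (t \*: id).
    by apply/funext => y /=; rewrite mulrC.
  rewrite e; apply: is_derive_eq h' _.
  by congr (- _); exact: mulr1.
have h2 := @is_derive1_comp _ expR (fun y : R => - (y * t)) x _ _ (is_derive_expR _) h1.
have h3 := is_deriveZ (t ^+ m) h2.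
have -> : (fun x => Gf m x t) = t ^+ m \*: (expR \o (fun y : R => - (y * t))).
  by apply/funext => y.
apply: is_derive_eq h3 _.
rewrite /Gf /= exprS. rewrite [X in X = _]/(GRing.scale _ _) /=; ring.
Qed.

Definition D0 : set R := `[0%R, +oo[.

Definition integ (l : R) :=
  nu.-integrable (`[0%R, +oo[ : set R) (fun t => (expR (- (l * t)))%:E).

Definition G (m : nat) (l : R) : R := \int[nu]_(t in (`[0%R, +oo[ : set R)) Gf m l t.

Lemma derG (m : nat) (l l' : R) : l' < l -> integ l' ->
  derivable (G m) l 1 /\ derive1 (G m) l = - G m.+1 l.
Proof.
move=> ll' il'.
set u := (l' + l) / 2.
have l'u : l' < u by rewrite /u; lra.
have ul : u < l by rewrite /u; lra.
have Ia : `]u, l + 1[%classic l by rewrite /= in_itv /=; apply/andP; split => //; lra.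
have intf : forall x, `]u, l + 1[%classic x ->
    nu.-integrable (`[0%R, +oo[ : set R) (EFin \o (fun x t => Gf m x t) x).
  move=> x; rewrite /= in_itv /= => /andP[ux _].
  by apply: (@intGf m x l'); [lra|].
have derf1 : forall x y, `]u, l + 1[%classic x -> D0 y ->
    derivable ((fun x t => Gf m x t) ^~ y) x 1.
  by move=> x y _ _; have [] := derGf m y x.
set Gb := fun y => `|Gf m.+1 u y|.
have G0 : forall y, 0 <= Gb y by move=> y; exact: normr_ge0.
have intG : nu.-integrable (`[0%R, +oo[ : set R) (EFin \o Gb).
  apply: le_integrable (@intGf m.+1 u l' l'u il').
    exact: measurable_itv.
    apply/measurable_EFinP; apply: measurableT_comp => //; exact: mGf.
  by move=> y _; rewrite /Gb /= normr_id.
have Gub : forall x y, `]u, l + 1[%classic x -> D0 y ->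
    `|partial1of2 (fun x t => Gf m x t) x y| <= Gb y.
  move=> x y; rewrite /= in_itv /= => /andP[ux _]; rewrite /D0 /= in_itv /= andbT => y0.
  rewrite /partial1of2 derive1E; have [_ ->] := derGf m y x; rewrite normrN /Gb.
  rewrite !ger0_norm ?mulr_ge0 ?exprn_ge0 ?expR_ge0 //.
  rewrite /Gf ler_wpM2l ?exprn_ge0 // ler_expR lerN2 ler_wpM2r //; lra.
split; first exact: (derivable_under_integral (measurable_itv _) Ia intf derf1 G0 intG Gub).
rewrite /G (differentiation_under_integral (measurable_itv _) Ia intf derf1 G0 intG Gub).
transitivity (\int[nu]_(y in (`[0%R, +oo[ : set R)) (-1 * Gf m.+1 l y)).
  apply: eq_Rintegral => y _.
  by rewrite /partial1of2 derive1E; have [_ ->] := derGf m y l; rewrite mulN1r.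
rewrite (@RintegralZl _ _ _ nu _ (Gf m.+1 l)); first by rewrite mulN1r.
  exact: measurable_itv.
exact: (@intGf m.+1 l l').
Qed.

Lemma between (a : \bar R) (l : R) : (a < l%:E)%E -> exists l', (a < l'%:E)%E /\ l' < l.
Proof.
case: a => [r| |] //=.
- rewrite lte_fin => rl; exists ((r + l) / 2); rewrite lte_fin; split; lra.
- by move=> _; exists (l - 1); split; [exact: ltNyr|lra].
Qed.

Lemma near_between (a : \bar R) (l : R) : (a < l%:E)%E -> \near l, (a < l%:E)%E.
Proof.
move=> /between [l' [al' l'l]].
near=> x.
apply: lt_trans al' _; rewrite lte_fin.
near: x; exact: lt_nbhsr.
Unshelve. all: end_near.
Qed.

Lemma derNG (a : \bar R) (g : R -> R) :
  (forall l, (a < l%:E)%E -> integ l) -> (forall l, (a < l%:E)%E -> g l = G 0 l) ->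
  forall m l, (a < l%:E)%E ->
    derive1n m g l = (-1) ^+ m * G m l /\ derivable (derive1n m g) l 1.
Proof.
move=> hint hg.
have dG : forall m l, (a < l%:E)%E ->
    derivable (G m) l 1 /\ derive1 (G m) l = - G m.+1 l.
  move=> m l al; have [l' [al' l'l]] := between al.
  exact: (@derG m l l' l'l (hint _ al')).
have eqm : forall m l, (a < l%:E)%E -> derive1n m g l = (-1) ^+ m * G m l.
  elim=> [|m IH] l al; first by rewrite /= expr0 mul1r hg.
  have ne : \near l, ((-1) ^+ m \*: G m) l = derive1n m g l.
    have := near_between al; apply: filterS => x ax; rewrite IH //.
  rewrite /= derive1E -(near_eq_derive _ ne).
  have [dG1 dG2] := dG m l al.
  rewrite deriveZ //= -derive1E dG2 exprS; rewrite /GRing.scale /=; ring.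
move=> m l al; split; first exact: eqm.
have ne : \near l, ((-1) ^+ m \*: G m) l = derive1n m g l.
  have := near_between al; apply: filterS => x ax; rewrite eqm //.
apply: near_eq_derivable ne _.
by apply: derivableZ; have [] := dG m l al.
Qed.

Lemma intG_fin (m : nat) (l l' : R) : l' < l -> integ l' ->
  (G m l)%:E = (\int[nu]_(t in (`[0%R, +oo[ : set R)) (Gf m l t)%:E)%E.
Proof.
move=> ll' il; rewrite /G /Rintegral fineK //.
apply: integrable_fin_num; first exact: measurable_itv.
exact: (@intGf m l l').
Qed.

Lemma harm_nd (t : R) (n : nat) : 0 <= t ->
  {homo (fun k => (Gf n (harmonic k) t)%:E) : i j / (i <= j)%N >-> (i <= j)%E}.
Proof.
move=> t0 i j ij; rewrite lee_fin /Gf ler_wpM2l ?exprn_ge0 // ler_expR lerN2.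
rewrite ler_wpM2r // /harmonic /= lef_pV2 ?posrE ?ltr0n // ler_nat.
by rewrite ltnS.
Qed.

Lemma deriv0E (f : R -> R) (n : nat) (L : R) :
  (forall l, 0 < l -> integ l) ->
  (forall x, 0 < x -> derive1n n f x = (-1) ^+ n * G n x) ->
  derive1n n f x @[x --> 0^'+] --> L ->
  (\int[nu]_(t in (`[0%R, +oo[ : set R)) (t ^+ n)%:E)%E = ((-1) ^+ n * L)%:E.
Proof.
move=> hint hd hL.
have hu : forall k, 0 < harmonic k :> R by move=> k; exact: harmonic_gt0.
have h1 : derive1n n f (harmonic k) @[k --> \oo] --> L.
  by move/cvg_at_rightP : hL; apply; split => //; exact: cvg_harmonic.
have h2 : G n (harmonic k) @[k --> \oo] --> (-1) ^+ n * L.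
  have h3 : (-1) ^+ n * derive1n n f (harmonic k) @[k --> \oo] --> (-1) ^+ n * L.
    exact: cvgMr.
  apply: cvg_trans h3; apply: near_eq_cvg; apply: nearW => k /=.
  by rewrite hd // mulrA -expr2 -exprM mulnC exprM sqrrN !expr1n mul1r.
have h4 : (G n (harmonic k))%:E @[k --> \oo] --> ((-1) ^+ n * L)%:E.
  by apply: cvg_comp h2 _.
have h5 : (\int[nu]_(t in (`[0%R, +oo[ : set R)) (Gf n (harmonic k) t)%:E)%E
    @[k --> \oo] --> (\int[nu]_(t in (`[0%R, +oo[ : set R))
       limn (fun k => (Gf n (harmonic k) t)%:E))%E.
  apply: cvg_monotone_convergence.
  - exact: measurable_itv.
  - by move=> k; apply/measurable_EFinP; exact: mGf.
  - move=> k t; rewrite /= in_itv /= andbT => t0.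
    by rewrite lee_fin /Gf mulr_ge0 ?exprn_ge0 ?expR_ge0.
  - by move=> t; rewrite /= in_itv /= andbT => t0; exact: harm_nd.
have h6 : (\int[nu]_(t in (`[0%R, +oo[ : set R))
       limn (fun k => (Gf n (harmonic k) t)%:E))%E =
    (\int[nu]_(t in (`[0%R, +oo[ : set R)) (t ^+ n)%:E)%E.
  apply: eq_integral => t _.
  apply: cvg_lim => //.
  have : Gf n (harmonic k) t @[k --> \oo] --> t ^+ n.
    rewrite -[X in _ --> X]mulr1 -expR0.
    apply: cvgMr.
    have -> : (0 : R) = - (0 * t) by rewrite mul0r oppr0.
    apply: cvg_comp; last exact: continuous_expR.
    apply: cvgN; apply: cvgMl; exact: cvg_harmonic.
  by move=> h; apply: cvg_comp h _.
have h7 : (\int[nu]_(t in (`[0%R, +oo[ : set R)) (Gf n (harmonic k) t)%:E)%E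
    @[k --> \oo] --> ((-1) ^+ n * L)%:E.
  apply: cvg_trans h4; apply: near_eq_cvg; apply: nearW => k /=.
  apply: (@intG_fin n (harmonic k) (harmonic k / 2)).
    by have := hu k; lra.
  by apply: hint; have := hu k; lra.
by rewrite -h6 -(cvg_lim _ h5) // (cvg_lim _ h7).
Qed.

Lemma expser (l : R) (c : nat -> R) : l <= 0 ->
  (forall n, (\int[nu]_(t in (`[0%R, +oo[ : set R)) (t ^+ n)%:E)%E = (c n)%:E) ->
  (\int[nu]_(t in (`[0%R, +oo[ : set R)) (expR (- (l * t)))%:E)%E =
  (\sum_(0 <= n <oo) ((c n * (-l) ^+ n / n`!%:R)%:E))%E.
Proof.
move=> l0 hc.
have k0 : forall n, 0 <= (-l) ^+ n / n`!%:R :> R.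
  by move=> n; rewrite divr_ge0 ?exprn_ge0 // oppr_ge0.
transitivity (\sum_(0 <= n <oo) (\int[nu]_(t in (`[0%R, +oo[ : set R))
    (((-l) ^+ n / n`!%:R) * t ^+ n)%:E))%E; last first.
  congr (limn _); apply/funext => k; apply: eq_bigr => n _.
  under eq_integral do rewrite EFinM.
  rewrite ge0_integralZl_EFin //.
  - by rewrite hc -EFinM mulrC mulrA.
  - by move=> t; rewrite /= in_itv /= andbT => t0; rewrite lee_fin exprn_ge0.
  - by apply/measurable_EFinP; exact: exprn_measurable.
rewrite -integral_nneseries; last 3 first.
- exact: measurable_itv.
- move=> n; apply/measurable_EFinP; apply: measurable_funM => //.
- by move=> n t; rewrite /= in_itv /= andbT => t0; rewrite lee_fin mulr_ge0 ?exprn_ge0.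
apply: eq_integral => t _.
transitivity (\sum_(0 <= n <oo) ((exp_coeff (- (l * t)) n)%:E))%E.
  by rewrite Lser1 //; exact: is_cvg_series_exp_coeff.
congr (limn _); apply/funext => k; apply: eq_bigr => n _; congr EFin.
rewrite /exp_coeff /= -mulNr exprMn; ring.
Qed.
End Core.

Lemma Gf0 (R : realType) (l t : R) : Gf 0 l t = expR (- (l * t)).
Proof. by rewrite /Gf expr0 mul1r. Qed.

Theorem lemma2p1 (R : realType) (f : R -> R) (nu : {measure set R -> \bar R}) :
  completely_monotone f -> represents f nu ->
  (forall m (l : R), (omega0 f < l%:E)%E -> derivable ((derive1n m (fext f))) l 1) /\
  (forall m (l : R), (omega0 f < l%:E)%E ->
     0 <= (-1) ^+ m * (derive1n m (fext f)) l /\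
     (((derive1n m (fext f)) l)%:E =
       ((-1) ^+ m)%:E * \int[nu]_(t in `[0%R, +oo[) (t ^+ m * expR (- (l * t)))%:E)%E) /\
  (forall l : R, (omega0 f < l%:E)%E ->
     (fext f l)%:E = (\int[nu]_(t in `[0%R, +oo[) (expR (- (l * t)))%:E)%E).
Proof.
move=> _ rep.
have mexp : forall l : R, measurable_fun (`[0%R, +oo[ : set R) (fun t => expR (- (l * t))).
  by move=> l; apply: measurableT_comp; [exact: measurable_expR|apply: measurableT_comp].

have integ_fin : forall l : R,
    (\int[nu]_(t in `[0%R, +oo[) (expR (- (l * t)))%:E < +oo)%E -> integ nu l.
  move=> l hl; apply/integrableP; split.
    by apply/measurable_EFinP; exact: mexp.
  under eq_integral => t _ do rewrite abse_EFin (ger0_norm (expR_ge0 _)).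
  exact: hl.
have int_pos : forall l : R, 0 < l -> integ nu l.
  by move=> l l0; apply: integ_fin; rewrite -rep // ltry.
have G0E : forall l : R, 0 < l -> f l = G nu 0 l.
  move=> l l0; apply/EFin_inj; rewrite rep // (@intG_fin _ nu 0 l (l / 2)); last 2 first.
  - lra.
  - by apply: int_pos; lra.
  by apply: eq_integral => t _; rewrite Gf0.
have HA : (forall l, (omega0 f < l%:E)%E -> integ nu l) /\
          (forall l, (omega0 f < l%:E)%E -> fext f l = G nu 0 l).
  rewrite /omega0; case: (pselect (derivs0_finite f)) => hd; last first.
    rewrite asboolF //; split => l; rewrite lte_fin => l0.
      exact: int_pos.
    by rewrite /fext l0; exact: G0E.
  rewrite asboolT //.
  have hder : forall m l, (0%E < l%:E)%E ->
      derive1n m f l = (-1) ^+ m * G nu m l /\ derivable (derive1n m f) l 1.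
    apply: derNG.
      by move=> l; rewrite lte_fin; exact: int_pos.
    by move=> l; rewrite lte_fin; exact: G0E.
  set c := fun n => (-1) ^+ n * Defs.deriv0 f n.
  have hc : forall n, (\int[nu]_(t in (`[0%R, +oo[ : set R)) (t ^+ n)%:E)%E = (c n)%:E.
    move=> n; have [L hL] := hd n.
    rewrite /c; have -> : Defs.deriv0 f n = L by apply: cvg_lim.
    apply: (@deriv0E _ nu f n L) => //.
    by move=> x x0; have [] := hder n x x0.
  have c0 : forall n, 0 <= c n.
    by move=> n; rewrite -lee_fin -hc; apply: integral_ge0 => t;
      rewrite /= in_itv /= andbT => t0; rewrite lee_fin exprn_ge0.
  have term_eq : forall (l : R) n, taylor0_term f l n = c n * (-l) ^+ n / n`!%:R.
    move=> l n; rewrite /taylor0_term /c.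
    have -> : (-l) ^+ n = (-1) ^+ n * l ^+ n by rewrite -exprMn mulN1r.
    have h1 : (-1) ^+ n * (-1) ^+ n = 1 :> R.
      by rewrite -expr2 -exprM mulnC exprM sqrrN !expr1n.
    transitivity (((-1) ^+ n * (-1) ^+ n) * (Defs.deriv0 f n / n`!%:R * l ^+ n)).
      by rewrite h1 mul1r.
    ring.
  have ser_eq : forall l : R, l <= 0 ->
      (\int[nu]_(t in `[0%R, +oo[) (expR (- (l * t)))%:E)%E =
      (\sum_(0 <= n <oo) (taylor0_term f l n)%:E)%E.
    move=> l l0; rewrite (expser l0 hc).
    by congr (limn _); apply/funext => k; apply: eq_bigr => n _; rewrite term_eq.
  have key : forall l, (ereal_inf [set l%:E | l in [set l | taylor0_cvg f l]] < l%:E)%E ->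
      l <= 0 -> integ nu l /\ fext f l = G nu 0 l.
    move=> l /ereal_inf_lt [y [l' hl' <-]]; rewrite lte_fin => l'l l0.
    have l'0 : l' <= 0 by lra.
    have il' : integ nu l'.
      apply: integ_fin; rewrite (ser_eq _ l'0) Lser1 //; exact: ltry.
    have il : integ nu l.
      apply: le_integrable il'.
      - exact: measurable_itv.
      - by apply/measurable_EFinP; exact: mexp.
      move=> t; rewrite /= in_itv /= andbT => t0.
      rewrite lee_fin !ger0_norm ?expR_ge0 // ler_expR lerN2.
      by rewrite ler_wpM2r // ltW.
    split => //.
    rewrite /fext ifF; last by apply/negbTE; rewrite -leNgt.
    apply: cvg_lim => //.
    apply: Lser2.
      by move=> n; rewrite term_eq divr_ge0 // mulr_ge0 // exprn_ge0 // oppr_ge0.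
    rewrite -ser_eq // (@intG_fin _ nu 0 l l') //.
    by apply: eq_integral => t _; rewrite Gf0.
  split => l al; (have [l0|l0] := ltP 0 l).
  - exact: int_pos.
  - by have [] := key l al l0.
  - by rewrite /fext l0; exact: G0E.
  - by have [] := key l al l0.
have [Hi He] := HA.
have hD := @derNG _ nu (omega0 f) (fext f) Hi He.
split; first by move=> m l al; have [] := hD m l al.
split.
  move=> m l al; have [e _] := hD m l al.
  have [l' [al' l'l]] := between al.
  split.
    rewrite e mulrA -expr2 -exprM mulnC exprM sqrrN !expr1n mul1r.
    apply: Rintegral_ge0 => t; rewrite /= in_itv /= andbT => t0.
    by rewrite /Gf mulr_ge0 ?exprn_ge0 ?expR_ge0.
  by rewrite e EFinM (@intG_fin _ nu m l l') //; exact: Hi.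
move=> l al; have [l' [al' l'l]] := between al.
rewrite (He l al) (@intG_fin _ nu 0 l l') //; last exact: Hi.
by apply: eq_integral => t _; rewrite Gf0.
Qed.
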